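(* Let $\mathcal{A}$ be a unital semiprime algebra over a field $F$ with $\operatorname{char}(F)\neq2$. Then $\operatorname{QJDer}(\mathcal{A})=\operatorname{Cent}(\mathcal{A})+\operatorname{Der}(\mathcal{A})$.
   Context: $\mathcal{A}$ is semiprime if $a\mathcal{A}a=\{0\}$ implies $a=0$. $x\circ y=xy+yx$. $\operatorname{QJDer}(\mathcal{A})$: linear $f:\mathcal{A}\to\mathcal{A}$ for which there is a linear $h$ with $f(x)\circ y+x\circ f(y)=h(x\circ y)$ for all $x,y$. $\operatorname{Cent}(\mathcal{A})$: linear $f$ with $f(xy)=f(x)y=xf(y)$. $\operatorname{Der}(\mathcal{A})$: linear $d$ with $d(xy)=d(x)y+xd(y)$. Sums of sets of maps are sets of pointwise sums. *)

(* Defs.v *)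
From HB Require Import structures.
From mathcomp Require Import all_boot all_order all_algebra.
Set Implicit Arguments. Unset Strict Implicit. Unset Printing Implicit Defensive.
Import GRing.Theory.
Local Open Scope ring_scope.

Definition semiprime (R : pzRingType) : Prop :=
  forall a : R, (forall x : R, a * x * a = 0) -> a = 0.

Definition jprod (R : pzRingType) (x y : R) : R := x * y + y * x.

Definition QJDer (F : fieldType) (A : algType F) (f : A -> A) : Prop :=
  linear f /\
  exists h : A -> A, linear h /\
    forall x y : A, jprod (f x) y + jprod x (f y) = h (jprod x y).

Definition Cent (F : fieldType) (A : algType F) (f : A -> A) : Prop :=
  linear f /\ forall x y : A, f (x * y) = f x * y /\ f (x * y) = x * f y.

Definition Der (F : fieldType) (A : algType F) (d : A -> A) : Prop :=
  linear d /\ forall x y : A, d (x * y) = d x * y + x * d y.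

(* Main.v *)
Require Import Defs.
From HB Require Import structures.
From mathcomp Require Import all_boot all_order all_algebra.
From Stdlib Require Import FunctionalExtensionality.
Import GRing.Theory.
Local Open Scope ring_scope.
Set Implicit Arguments. Unset Strict Implicit. Unset Printing Implicit Defensive.

Section NCNorm.
Variable R : pzRingType.
Variable fa : R -> R.
Hypothesis fa_add : forall x y, fa (x + y) = fa x + fa y.

Inductive nexpr : Type :=
| NAtom of nat | NZero | NOne | NAdd of nexpr & nexpr | NOpp of nexpr
| NMul of nexpr & nexpr | NMuln of nexpr & nat | NF of nexpr.

Fixpoint neval (env : seq R) (e : nexpr) : R :=
  match e with
  | NAtom i => nth 0 env i
  | NZero => 0
  | NOne => 1
  | NAdd a b => neval env a + neval env b
  | NOpp a => - neval env a
  | NMul a b => neval env a * neval env b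
  | NMuln a n => neval env a *+ n
  | NF a => fa (neval env a)
  end.

Definition letter := (bool * (nat * seq nat))%type.
Definition mono := seq letter.
Definition poly := seq (int * mono).

Definition meval0 (env : seq R) (m : seq nat) : R := foldr (fun i acc => nth 0 env i * acc) 1 m.
Definition leval (env : seq R) (l : letter) : R :=
  if l.1 then fa (meval0 env l.2.2) else nth 0 env l.2.1.
Definition meval (env : seq R) (m : mono) : R := foldr (fun l acc => leval env l * acc) 1 m.
Definition peval (env : seq R) (p : poly) : R :=
  foldr (fun t acc => (meval env t.2) *~ t.1 + acc) 0 p.

Definition pmul (p q : poly) : poly :=
  flatten (map (fun t => map (fun s => (t.1 * s.1, t.2 ++ s.2)%R) q) p).

Definition plain (m : mono) : bool := all (fun l => ~~ l.1) m.
Definition toF (t : int * mono) : int * mono := (t.1, [:: (true, (0%N, map (fun l => l.2.1) t.2))]).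

Fixpoint nf (e : nexpr) : poly :=
  match e with
  | NAtom i => [:: (1%R, [:: (false, (i, [::]))])]
  | NZero => [::]
  | NOne => [:: (1%R, [::])]
  | NAdd a b => nf a ++ nf b
  | NOpp a => map (fun t => (- t.1, t.2)%R) (nf a)
  | NMul a b => pmul (nf a) (nf b)
  | NMuln a n => map (fun t => (t.1 *+ n, t.2)%R) (nf a)
  | NF a => map toF (nf a)
  end.

Fixpoint wf (e : nexpr) : bool :=
  match e with
  | NAtom _ | NZero | NOne => true
  | NAdd a b | NMul a b => wf a && wf b
  | NOpp a | NMuln a _ => wf a
  | NF a => wf a && all (fun t => plain t.2) (nf a)
  end.

Fixpoint pinsert (t : int * mono) (p : poly) : poly :=
  match p with
  | [::] => [:: t]
  | s :: p' => if s.2 == t.2 then (s.1 + t.1, s.2)%R :: p' else s :: pinsert t p'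
  end.

Definition collect (p : poly) : poly := foldr pinsert [::] p.
Definition cleanp (p : poly) : poly := filter (fun t => t.1 != 0) p.

Lemma meval_cat env m1 m2 : meval env (m1 ++ m2) = meval env m1 * meval env m2.
Proof. by elim: m1 => [|i m IH] /=; rewrite ?mul1r // IH mulrA. Qed.

Lemma peval_cat env p q : peval env (p ++ q) = peval env p + peval env q.
Proof. by elim: p => [|t p IH] /=; rewrite ?add0r // IH addrA. Qed.

Lemma peval_map1 env t q :
  peval env (map (fun s => (t.1 * s.1, t.2 ++ s.2)%R) q) = meval env t.2 *~ t.1 * peval env q.
Proof.
elim: q => [|s q IHq] /=; first by rewrite /peval /= mulr0.
rewrite IHq mulrDr meval_cat; congr (_ + _).
by rewrite mulrzAl mulrzAr mulrzA_C.
Qed.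

Lemma peval_pmul env p q : peval env (pmul p q) = peval env p * peval env q.
Proof.
elim: p => [|t p IH] /=; first by rewrite mul0r.
by rewrite /pmul /= peval_cat -/(pmul p q) IH mulrDl peval_map1.
Qed.

Lemma fa0 : fa 0 = 0.
Proof. by have h := fa_add 0 0; rewrite addr0 in h; apply: (addrI (fa 0)); rewrite -h addr0. Qed.

Lemma faN x : fa (- x) = - fa x.
Proof. by have := fa_add x (- x); rewrite subrr fa0 => h; apply: (addrI (fa x)); rewrite -h subrr. Qed.

Lemma fa_natmul x n : fa (x *+ n) = fa x *+ n.
Proof. by elim: n => [|n IH]; rewrite ?mulr0n ?fa0 // !mulrS fa_add IH. Qed.

Lemma fa_mulz x k : fa (x *~ k) = fa x *~ k.
Proof. by case: k => n; rewrite ?NegzE ?mulrNz /= ?faN fa_natmul. Qed.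

Lemma plain_meval env m : plain m -> meval env m = meval0 env (map (fun l => l.2.1) m).
Proof.
elim: m => [|l m IH] //= /andP [hl hm].
by rewrite IH // /leval (negbTE hl).
Qed.

Lemma nf_sound env e : wf e -> peval env (nf e) = neval env e.
Proof.
elim: e => [i||| a IHa b IHb | a IHa | a IHa b IHb | a IHa n | a IHa] /=.
- by rewrite /peval /= /meval /= /leval /= mulr1 addr0.
- by [].
- by rewrite /peval /= /meval /= addr0.
- by case/andP => ha hb; rewrite peval_cat IHa // IHb.
- move=> ha; rewrite -IHa //; elim: (nf a) => [|t p IH] /=; first by rewrite oppr0.
  by rewrite IH opprD mulrNz.
- by case/andP => ha hb; rewrite peval_pmul IHa // IHb.
- move=> ha; rewrite -IHa //; elim: (nf a) => [|t p IH] /=; first by rewrite mul0rn.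
  by rewrite IH mulrnDl -mulr_natr mulrzA mulrz_nat.
- case/andP => ha hp; rewrite -IHa //; elim: (nf a) hp => [|t p IH] /=; first by rewrite fa0.
  case/andP => ht hp; rewrite IH // fa_add fa_mulz plain_meval //.
  by rewrite /meval /= /leval /= mulr1.
Qed.

Lemma peval_insert env t p : peval env (pinsert t p) = meval env t.2 *~ t.1 + peval env p.
Proof.
elim: p => [|s p IH] //=; case: eqP => [E|_] /=.
  by rewrite mulrzDr E addrA [X in X + _ = _]addrC.
by rewrite IH addrCA.
Qed.

Lemma peval_collect env p : peval env (collect p) = peval env p.
Proof. by elim: p => [|t p IH] //=; rewrite peval_insert IH. Qed.

Lemma peval_clean env p : peval env (cleanp p) = peval env p.
Proof.
elim: p => [|t p IH] //=; case: eqP => [E|_] /=; last by rewrite IH.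
by rewrite IH E mulr0z add0r.
Qed.

Definition nccheck (e1 e2 : nexpr) : bool :=
  wf e1 && wf e2 &&
  match cleanp (collect (nf (NAdd e1 (NOpp e2)))) with [::] => true | _ => false end.

Lemma nc_sound env e1 e2 : nccheck e1 e2 -> neval env e1 = neval env e2.
Proof.
rewrite /nccheck; case/andP => /andP [w1 w2]; case E: (cleanp _) => [|? ?] // _.
apply/eqP; rewrite -subr_eq0; apply/eqP.
have := peval_clean env (collect (nf (NAdd e1 (NOpp e2)))).
by rewrite E peval_collect nf_sound //= w1 w2.
Qed.

End NCNorm.

Definition idfun_add (R : pzRingType) : forall x y : R, id (x + y) = id x + id y := fun x y => erefl.

Ltac list_index x l :=
  lazymatch l with
  | nil => constr:(@None nat)
  | cons (?y, ?k) ?l' =>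
      lazymatch constr:((x, y)) with
      | (?a, ?a) => constr:(Some k)
      | _ => list_index x l'
      end
  end.

Ltac reify fa env t :=
  lazymatch t with
  | @Algebra.add _ ?a ?b =>
      let r1 := reify fa env a in
      lazymatch r1 with (?env1, ?e1) =>
      let r2 := reify fa env1 b in
      lazymatch r2 with (?env2, ?e2) => constr:((env2, NAdd e1 e2)) end end
  | @GRing.mul _ ?a ?b =>
      let r1 := reify fa env a in
      lazymatch r1 with (?env1, ?e1) =>
      let r2 := reify fa env1 b in
      lazymatch r2 with (?env2, ?e2) => constr:((env2, NMul e1 e2)) end end
  | @Algebra.opp _ ?a =>
      let r1 := reify fa env a in
      lazymatch r1 with (?env1, ?e1) => constr:((env1, NOpp e1)) end
  | @Algebra.natmul _ ?a ?n =>
      let r1 := reify fa env a in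
      lazymatch r1 with (?env1, ?e1) => constr:((env1, NMuln e1 n)) end
  | @Algebra.zero _ => constr:((env, NZero))
  | @GRing.one _ => constr:((env, NOne))
  | fa ?a =>
      let r1 := reify fa env a in
      lazymatch r1 with (?env1, ?e1) => constr:((env1, NF e1)) end
  | _ =>
      let r := list_index t env in
      lazymatch r with
      | Some ?n => constr:((env, NAtom n))
      | None =>
          let n := lazymatch env with
                   | nil => constr:(0%N)
                   | cons (_, ?k) _ => constr:(S k)
                   end in
          constr:((cons (t, n) env, NAtom n))
      end
  end.

Ltac nc_ringf fa hfa :=
  lazymatch goal with
  | |- @eq ?T ?l ?r =>
      let r1 := reify fa (@nil (T * nat)) l in
      lazymatch r1 with (?env1, ?e1) =>
      let r2 := reify fa env1 r in
      lazymatch r2 with (?env2, ?e2) =>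
        change (neval fa (map fst (rev env2)) e1 = neval fa (map fst (rev env2)) e2);
        apply: (nc_sound hfa); vm_compute; reflexivity
      end end
  end.

Ltac nc_ring := lazymatch goal with |- @eq ?T _ _ => nc_ringf (@id T) (@idfun_add T) end.


Section Base.
Variables (F : fieldType) (A : algType F).
Hypothesis hchar : 2%N \notin [pchar F].

Lemma two_nz : (2%:R : F) != 0.
Proof. by apply/negP => h; apply: (negP hchar); rewrite inE /= h. Qed.

Lemma two_cancel (a : A) : a *+ 2 = 0 -> a = 0.
Proof.
move=> h; have : (2%:R : F)^-1 *: (a *+ 2) = 0 by rewrite h scaler0.
by rewrite -scaler_nat scalerA mulVf ?two_nz // scale1r.
Qed.

Lemma pow2_cancel (a : A) k : a *+ (2 ^ k) = 0 -> a = 0.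
Proof.
elim: k a => [|k IH] a /=; first by rewrite expn0.
by rewrite expnS mulrnA => /IH; apply: two_cancel.
Qed.

Lemma cert_close (a b : A) k : (a - b) *+ (2 ^ k) = 0 -> a = b.
Proof. by move=> /pow2_cancel /eqP; rewrite subr_eq0 => /eqP. Qed.
End Base.

Definition Zr (R : pzRingType) (x : R) := x.


Section JD.
Variables (F : fieldType) (A : algType F).
Hypothesis hchar : 2%N \notin [pchar F].
Variable d : A -> A.
Hypothesis hadd : forall x y, d (x + y) = d x + d y.
Hypothesis hJ : forall x y, d (x * y + y * x) = d x * y + x * d y + d y * x + y * d x.

Let cert_close := @cert_close F A hchar.

Lemma hR u v : d (u * v) + d (v * u) - (d u * v + u * d v + d v * u + v * d u) = 0.
Proof. by rewrite -hadd hJ subrr. Qed.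

Lemma hRZ u v : Zr (d (u * v) + d (v * u) - (d u * v + u * d v + d v * u + v * d u)) = 0.
Proof. exact: hR. Qed.

Lemma trip u v w : d (u * v * w) + d (w * v * u) = d u * v * w + u * d v * w + u * v * d w + d w * v * u + w * d v * u + w * v * d u.
Proof.
  apply: (@cert_close _ _ 1).
  rewrite [LHS](_ : _ = ((Zr (d ((v) * (w)) + d ((w) * (v)) - (d (v) * (w) + (v) * d (w) + d (w) * (v) + (w) * d (v)))) * u) + (u * (Zr (d ((v) * (w)) + d ((w) * (v)) - (d (v) * (w) + (v) * d (w) + d (w) * (v) + (w) * d (v))))) - ((Zr (d ((v) * (w * u)) + d ((w * u) * (v)) - (d (v) * (w * u) + (v) * d (w * u) + d (w * u) * (v) + (w * u) * d (v))))) - ((Zr (d ((u) * (w)) + d ((w) * (u)) - (d (u) * (w) + (u) * d (w) + d (w) * (u) + (w) * d (u)))) * v) - (v * (Zr (d ((u) * (w)) + d ((w) * (u)) - (d (u) * (w) + (u) * d (w) + d (w) * (u) + (w) * d (u))))) + ((Zr (d ((u) * (v)) + d ((v) * (u)) - (d (u) * (v) + (u) * d (v) + d (v) * (u) + (v) * d (u)))) * w) + (w * (Zr (d ((u) * (v)) + d ((v) * (u)) - (d (u) * (v) + (u) * d (v) + d (v) * (u) + (v) * d (u))))) + ((Zr (d ((u) * (v * w)) + d ((v * w) * (u)) - (d (u) * (v * w) + (u) * d (v * w) + d (v * w) * (u) + (v * w) * d (u))))) + ((Zr (d ((u) * (w * v)) + d ((w * v) * (u)) - (d (u) * (w * v)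 + (u) * d (w * v) + d (w * v) * (u) + (w * v) * d (u))))) - ((Zr (d ((u * w) * (v)) + d ((v) * (u * w)) - (d (u * w) * (v) + (u * w) * d (v) + d (v) * (u * w) + (v) * d (u * w))))) + ((Zr (d ((v * u) * (w)) + d ((w) * (v * u)) - (d (v * u) * (w) + (v * u) * d (w) + d (w) * (v * u) + (w) * d (v * u))))) + ((Zr (d ((u * v) * (w)) + d ((w) * (u * v)) - (d (u * v) * (w) + (u * v) * d (w) + d (w) * (u * v) + (w) * d (u * v)))))); last by rewrite /Zr; nc_ringf d hadd.
  by rewrite !hRZ !(mulr0, mul0r, mul0rn, oppr0, addr0).
Qed.

Lemma tripR u v w : d (u * v * w) + d (w * v * u) - (d u * v * w + u * d v * w + u * v * d w + d w * v * u + w * d v * u + w * v * d u) = 0.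
Proof. by rewrite trip subrr. Qed.

Lemma tripRZ u v w : Zr (d (u * v * w) + d (w * v * u) - (d u * v * w + u * d v * w + u * v * d w + d w * v * u + w * d v * u + w * v * d u)) = 0.
Proof. exact: tripR. Qed.

Definition Gd x y := d (x * y) - d x * y - x * d y.

Lemma herstein x y z : Gd x y * z * (x * y - y * x) + (x * y - y * x) * z * Gd x y = 0.
Proof.
rewrite /Gd.
  apply: (@cert_close _ _ 1).
  rewrite [LHS](_ : _ = - ((Zr (d ((x) * (y * z * y) * (x)) + d ((x) * (y * z * y) * (x)) - (d (x) * (y * z * y) * (x) + (x) * d (y * z * y) * (x) + (x) * (y * z * y) * d (x) + d (x) * (y * z * y) * (x) + (x) * d (y * z * y) * (x) + (x) * (y * z * y) * d (x))))) - (x * (Zr (d ((y) * (z) * (y)) + d ((y) * (z) * (y)) - (d (y) * (z) * (y) + (y) * d (z) * (y) + (y) * (z) * d (y) + d (y) * (z) * (y) + (y) * d (z) * (y) + (y) * (z) * d (y)))) * x) - ((Zr (d ((y) * (x * z * x) * (y)) + d ((y) * (x * z * x) * (y)) - (d (y) * (x * z * x) * (y) + (y) * d (x * z * x) * (y) + (y) * (x * z * x) * d (y) + d (y) * (x * z * x) * (y) + (y) * d (x * z * x) * (y) + (y) * (x * z * x) * d (y))))) - (y * (Zr (d ((x) * (z) * (x)) + d ((x) * (z) * (x)) - (d (x) * (z) * (x) + (x) * d (z) * (x) + (x) * (z) * d (x) + d (x) * (z) * (x) + (x) * d (z) * (x) + (x) * (z) * d (x)))) * y) + ((Zr (d ((x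 * y) * (z) * (y * x)) + d ((y * x) * (z) * (x * y)) - (d (x * y) * (z) * (y * x) + (x * y) * d (z) * (y * x) + (x * y) * (z) * d (y * x) + d (y * x) * (z) * (x * y) + (y * x) * d (z) * (x * y) + (y * x) * (z) * d (x * y))))) *+ 2 + ((Zr (d ((x) * (y)) + d ((y) * (x)) - (d (x) * (y) + (x) * d (y) + d (y) * (x) + (y) * d (x)))) * z * x * y) *+ 2 + (x * y * z * (Zr (d ((x) * (y)) + d ((y) * (x)) - (d (x) * (y) + (x) * d (y) + d (y) * (x) + (y) * d (x))))) *+ 2); last by rewrite /Zr; nc_ringf d hadd.
  by rewrite !tripRZ !hRZ !(mulr0, mul0r, mul0rn, oppr0, addr0).
Qed.
End JD.

Section Bresar.
Variables (F : fieldType) (A : algType F).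
Hypothesis hchar : 2%N \notin [pchar F].
Hypothesis hsp : semiprime A.
Let two_cancel := @two_cancel F A hchar.

Lemma sp_lemma (a b : A) : (forall z, a * z * b + b * z * a = 0) -> forall z, a * z * b = 0.
Proof.
move=> h z; apply: hsp => w; apply: two_cancel.
rewrite [LHS](_ : _ = - ((a * (z * b * w) * b + b * (z * b * w) * a) * z * a)
   + (a * (z * b * w * a * z) * b + b * (z * b * w * a * z) * a)
   + a * z * b * w * (a * z * b + b * z * a)); last by rewrite ?mulrA; nc_ring.
by rewrite !h !(mul0r, mulr0, oppr0, addr0).
Qed.

Lemma sp_central (a : A) : (forall z u v, a * z * (u * v - v * u) = 0) -> forall t, a * t = t * a.
Proof.
move=> h t; apply/eqP; rewrite -subr_eq0; apply/eqP; apply: hsp => w.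
rewrite [LHS](_ : _ = a * (t * w) * (a * t - t * a) - t * (a * w * (a * t - t * a)));
  last by rewrite ?mulrA; nc_ring.
by rewrite !h mulr0 subr0.
Qed.

Lemma sp_central_nil (g : A) : (forall t, g * t = t * g) -> g * g * g = 0 -> g = 0.
Proof.
move=> hc h3.
have hc2 : forall t, g * g * t = t * (g * g).
  by move=> t; rewrite -mulrA (hc t) mulrA (hc t) -mulrA.
have h2 : g * g = 0.
  by apply: hsp => w; rewrite -mulrA -hc2 !mulrA h3 !mul0r.
by apply: hsp => w; rewrite -mulrA -hc mulrA h2 mul0r.
Qed.

Variable d : A -> A.
Hypothesis hadd : forall x y, d (x + y) = d x + d y.
Hypothesis hJ : forall x y, d (x * y + y * x) = d x * y + x * d y + d y * x + y * d x.

Let G := Gd d.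

Lemma d0 : d 0 = 0.
Proof. by have h := hadd 0 0; rewrite addr0 in h; apply: (addrI (d 0)); rewrite -h addr0. Qed.

Lemma dN x : d (- x) = - d x.
Proof. by have := hadd x (- x); rewrite subrr d0 => h; apply: (addrI (d x)); rewrite -h subrr. Qed.

Lemma G_anti x y : G y x = - G x y.
Proof.
apply/eqP; rewrite -addr_eq0; apply/eqP.
have := hR hadd hJ x y; rewrite /G /Gd => h.
by rewrite -[RHS]h; nc_ring.
Qed.

Lemma use1 (a b s t : A) : a = b -> s - t = a - b -> s = t.
Proof. by move=> -> /eqP; rewrite subrr subr_eq0 => /eqP. Qed.

Lemma G_addl x u y : G (x + u) y = G x y + G u y.
Proof. rewrite /G /Gd mulrDl !hadd; nc_ring. Qed.

Lemma G_addr x y v : G x (y + v) = G x y + G x v.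
Proof. rewrite /G /Gd mulrDr !hadd; nc_ring. Qed.

Lemma step_e x y z : G x y * z * (x * y - y * x) = 0.
Proof. by apply: sp_lemma => w; apply: herstein. Qed.

Lemma step_f x u y z : G x y * z * (u * y - y * u) = 0.
Proof.
have e1 := step_e (x + u) y z; rewrite G_addl in e1.
have h : G x y * z * (u * y - y * u) + G u y * z * (x * y - y * x) = 0.
  rewrite [LHS](_ : _ = (G x y + G u y) * z * ((x + u) * y - y * (x + u))
      - G x y * z * (x * y - y * x) - G u y * z * (u * y - y * u)); last by nc_ring.
  by rewrite e1 !step_e !subr0.
apply: hsp => w.
rewrite [LHS](_ : _ = G x y * z * (u * y - y * u) * w * (G x y * z * (u * y - y * u) + G u y * z * (x * y - y * x))
   - G x y * (z * (u * y - y * u) * w * G u y * z) * (x * y - y * x)); last by nc_ring.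
by rewrite h step_e mulr0 subr0.
Qed.

Lemma step_g x y u v z : G x y * z * (u * v - v * u) = 0.
Proof.
have e1 := step_f x u (y + v) z; rewrite G_addr in e1.
have h : G x y * z * (u * v - v * u) + G x v * z * (u * y - y * u) = 0.
  rewrite [LHS](_ : _ = (G x y + G x v) * z * (u * (y + v) - (y + v) * u)
      - G x y * z * (u * y - y * u) - G x v * z * (u * v - v * u)); last by nc_ring.
  by rewrite e1 !step_f !subr0.
apply: hsp => w.
rewrite [LHS](_ : _ = G x y * z * (u * v - v * u) * w * (G x y * z * (u * v - v * u) + G x v * z * (u * y - y * u))
   - G x y * (z * (u * v - v * u) * w * G x v * z) * (u * y - y * u)); last by nc_ring.
by rewrite h step_f mulr0 subr0.
Qed.

Lemma G_zero x y : G x y = 0.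
Proof.
set g := G x y.
have hc : forall t, g * t = t * g by apply: sp_central => z u v; apply: step_g.
have hk : forall p q, g * (p * q - q * p) = 0.
  by move=> p q; rewrite -[g]mulr1; apply: step_g.
set k := x * y - y * x.
have gk : g * k = 0 by apply: hk.
have kg : k * g = 0 by rewrite -hc gk.
have e := hJ g k; rewrite gk kg addr0 d0 in e.
have e3 : g * g * d k = 0.
  apply: two_cancel.
  rewrite [LHS](_ : _ = g * (d g * k + g * d k + d k * g + k * d g) - (g * d g - d g * g) * k
     - d g * (g * k) - g * (d k * g - g * d k) - (g * k) * d g); last by nc_ring.
  by rewrite -e (hc (d g)) (hc (d k)) gk !subrr !(mulr0, mul0r, subr0).
have h2g : g *+ 2 = d k - (d x * y - y * d x) - (x * d y - d y * x).
  have ga := G_anti x y; rewrite /G /Gd in ga.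
  apply: (use1 ga); rewrite /k /g /G /Gd hadd dN; nc_ring.
apply: sp_central_nil => //; apply: two_cancel.
rewrite [LHS](_ : _ = g * g * (g *+ 2)); last by nc_ring.
rewrite h2g [LHS](_ : _ = g * g * d k - g * (g * (d x * y - y * d x)) - g * (g * (x * d y - d y * x)));
  last by nc_ring.
by rewrite e3 !hk !mulr0 !subr0.
Qed.

Lemma jder_der x y : d (x * y) = d x * y + x * d y.
Proof. by have := G_zero x y; rewrite /G /Gd => /eqP; rewrite subr_eq0 subr_eq => /eqP ->; nc_ring. Qed.

End Bresar.


Section Cpart.
Variables (F : fieldType) (A : algType F).
Hypothesis hchar : 2%N \notin [pchar F].
Hypothesis hsp : semiprime A.
Variable f : A -> A.
Variable c : A.
Hypothesis hfadd : forall x y, f (x + y) = f x + f y.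
Hypothesis hR1 : forall x y, (f x * y + y * f x + x * f y + f y * x) *+ 2
  = (f (x * y) + f (y * x)) *+ 2 + (x * y + y * x) * c + c * (x * y + y * x).

Let cert_close := @cert_close F A hchar.
Let two_cancel := @two_cancel F A hchar.

Lemma R1z u v : (f u * v + v * f u + u * f v + f v * u) *+ 2 - ((f (u * v) + f (v * u)) *+ 2 + (u * v + v * u) * c + c * (u * v + v * u)) = 0.
Proof. by rewrite hR1 subrr. Qed.

Lemma R1zZ u v : Zr ((f u * v + v * f u + u * f v + f v * u) *+ 2 - ((f (u * v) + f (v * u)) *+ 2 + (u * v + v * u) * c + c * (u * v + v * u))) = 0.
Proof. exact: R1z. Qed.

Definition Dc y := c * y - y * c.
Local Notation D := Dc.

Lemma T01 y z : D (D (D (y * z - z * y))) - (D (D (y * D z - D z * y))) *+ 2 = 0.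
Proof.
rewrite /Dc.
  apply: (@cert_close _ _ 1).
  rewrite [LHS](_ : _ = - ((Zr ((f (y) * (z) + (z) * f (y) + (y) * f (z) + f (z) * (y)) *+ 2 - ((f ((y) * (z)) + f ((z) * (y))) *+ 2 + ((y) * (z) + (z) * (y)) * c + c * ((y) * (z) + (z) * (y))))) * c * c) + (c * (Zr ((f (y) * (z) + (z) * f (y) + (y) * f (z) + f (z) * (y)) *+ 2 - ((f ((y) * (z)) + f ((z) * (y))) *+ 2 + ((y) * (z) + (z) * (y)) * c + c * ((y) * (z) + (z) * (y))))) * c) *+ 2 - (c * c * (Zr ((f (y) * (z) + (z) * f (y) + (y) * f (z) + f (z) * (y)) *+ 2 - ((f ((y) * (z)) + f ((z) * (y))) *+ 2 + ((y) * (z) + (z) * (y)) * c + c * ((y) * (z) + (z) * (y)))))) + ((Zr ((f (y) * (z * c * c) + (z * c * c) * f (y) + (y) * f (z * c * c) + f (z * c * c) * (y)) *+ 2 - ((f ((y) * (z * c * c)) + f ((z * c * c) * (y))) *+ 2 + ((y) * (z * c * c) + (z * c * c) * (y)) * c + c * ((y) * (z * c * c) + (z * c * c) * (y)))))) - ((Zr ((f (c) * (z) + (z) * f (c) + (c) * f (z) + f (z) * (c)) *+ 2 - ((f ((c) * (z)) + f ((z) * (c))) *+ 2 + ((c) * (z) + (z) * (c)) * c + c * ((c) * (z) + (z) * (c))))) * c * y) - ((Zr ((f (c) * (z) + (z) * f (c) + (c) * f (z) + f (z) * (c)) *+ 2 - ((f ((c) * (z)) + f ((z) * (c))) *+ 2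 + ((c) * (z) + (z) * (c)) * c + c * ((c) * (z) + (z) * (c))))) * y * c) *+ 2 + (y * (Zr ((f (c) * (z) + (z) * f (c) + (c) * f (z) + f (z) * (c)) *+ 2 - ((f ((c) * (z)) + f ((z) * (c))) *+ 2 + ((c) * (z) + (z) * (c)) * c + c * ((c) * (z) + (z) * (c))))) * c) + (c * (Zr ((f (c) * (z) + (z) * f (c) + (c) * f (z) + f (z) * (c)) *+ 2 - ((f ((c) * (z)) + f ((z) * (c))) *+ 2 + ((c) * (z) + (z) * (c)) * c + c * ((c) * (z) + (z) * (c))))) * y) - (c * y * (Zr ((f (c) * (z) + (z) * f (c) + (c) * f (z) + f (z) * (c)) *+ 2 - ((f ((c) * (z)) + f ((z) * (c))) *+ 2 + ((c) * (z) + (z) * (c)) * c + c * ((c) * (z) + (z) * (c)))))) *+ 2 - (y * c * (Zr ((f (c) * (z) + (z) * f (c) + (c) * f (z) + f (z) * (c)) *+ 2 - ((f ((c) * (z)) + f ((z) * (c))) *+ 2 + ((c) * (z) + (z) * (c)) * c + c * ((c) * (z) + (z) * (c)))))) - ((Zr ((f (c) * (y) + (y) * f (c) + (c) * f (y) + f (y) * (c)) *+ 2 - ((f ((c) * (y)) + f ((y) * (c))) *+ 2 + ((c) * (y) + (y) * (c)) * c + c * ((c) * (y) + (y) * (c))))) * c * z) - ((Zr ((f (c) * (y) + (y) * f (c) + (c) * f (y) + f (y) * (c)) *+ 2 - ((f ((c) * (y)) + f ((y) * (c))) *+ 2 + ((c) * (y) + (y) * (c)) * c + c * ((c) * (y)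 + (y) * (c))))) * z * c) *+ 2 + (z * (Zr ((f (c) * (y) + (y) * f (c) + (c) * f (y) + f (y) * (c)) *+ 2 - ((f ((c) * (y)) + f ((y) * (c))) *+ 2 + ((c) * (y) + (y) * (c)) * c + c * ((c) * (y) + (y) * (c))))) * c) + (c * (Zr ((f (c) * (y) + (y) * f (c) + (c) * f (y) + f (y) * (c)) *+ 2 - ((f ((c) * (y)) + f ((y) * (c))) *+ 2 + ((c) * (y) + (y) * (c)) * c + c * ((c) * (y) + (y) * (c))))) * z) - (c * z * (Zr ((f (c) * (y) + (y) * f (c) + (c) * f (y) + f (y) * (c)) *+ 2 - ((f ((c) * (y)) + f ((y) * (c))) *+ 2 + ((c) * (y) + (y) * (c)) * c + c * ((c) * (y) + (y) * (c)))))) *+ 2 - (z * c * (Zr ((f (c) * (y) + (y) * f (c) + (c) * f (y) + f (y) * (c)) *+ 2 - ((f ((c) * (y)) + f ((y) * (c))) *+ 2 + ((c) * (y) + (y) * (c)) * c + c * ((c) * (y) + (y) * (c)))))) + ((Zr ((f (c) * (z * y) + (z * y) * f (c) + (c) * f (z * y) + f (z * y) * (c)) *+ 2 - ((f ((c) * (z * y)) + f ((z * y) * (c))) *+ 2 + ((c) * (z * y) + (z * y) * (c)) * c + c * ((c) * (z * y) + (z * y) * (c))))) * c) + (c * (Zr ((f (c) * (z * y) + (z * y) * f (c) + (c) * f (z * y) + f (z * y) * (c)) *+ 2 - ((f ((c) * (z * y)) + f ((z * y) * (c))) *+ 2 + ((c) * (z * y) + (z * y) * (c)) * c + c * ((c)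 * (z * y) + (z * y) * (c)))))) + ((Zr ((f (c) * (y * z) + (y * z) * f (c) + (c) * f (y * z) + f (y * z) * (c)) *+ 2 - ((f ((c) * (y * z)) + f ((y * z) * (c))) *+ 2 + ((c) * (y * z) + (y * z) * (c)) * c + c * ((c) * (y * z) + (y * z) * (c))))) * c) + (c * (Zr ((f (c) * (y * z) + (y * z) * f (c) + (c) * f (y * z) + f (y * z) * (c)) *+ 2 - ((f ((c) * (y * z)) + f ((y * z) * (c))) *+ 2 + ((c) * (y * z) + (y * z) * (c)) * c + c * ((c) * (y * z) + (y * z) * (c)))))) - ((Zr ((f (c) * (c) + (c) * f (c) + (c) * f (c) + f (c) * (c)) *+ 2 - ((f ((c) * (c)) + f ((c) * (c))) *+ 2 + ((c) * (c) + (c) * (c)) * c + c * ((c) * (c) + (c) * (c))))) * z * y) - ((Zr ((f (c) * (c) + (c) * f (c) + (c) * f (c) + f (c) * (c)) *+ 2 - ((f ((c) * (c)) + f ((c) * (c))) *+ 2 + ((c) * (c) + (c) * (c)) * c + c * ((c) * (c) + (c) * (c))))) * y * z) - (z * y * (Zr ((f (c) * (c) + (c) * f (c) + (c) * f (c) + f (c) * (c)) *+ 2 - ((f ((c) * (c)) + f ((c) * (c))) *+ 2 + ((c) * (c) + (c) * (c)) * c + c * ((c) * (c) + (c) * (c)))))) - (y * z * (Zr ((f (c) * (c) + (c) * f (c) + (c) * f (c) + f (c) * (c)) *+ 2 - ((f ((c) * (c)) + f ((c) * (c))) *+ 2 + ((c) * (c) + (c) * (c)) * c + c * ((c) * (c)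 + (c) * (c)))))) + ((Zr ((f (c) * (c * z) + (c * z) * f (c) + (c) * f (c * z) + f (c * z) * (c)) *+ 2 - ((f ((c) * (c * z)) + f ((c * z) * (c))) *+ 2 + ((c) * (c * z) + (c * z) * (c)) * c + c * ((c) * (c * z) + (c * z) * (c))))) * y) + (y * (Zr ((f (c) * (c * z) + (c * z) * f (c) + (c) * f (c * z) + f (c * z) * (c)) *+ 2 - ((f ((c) * (c * z)) + f ((c * z) * (c))) *+ 2 + ((c) * (c * z) + (c * z) * (c)) * c + c * ((c) * (c * z) + (c * z) * (c)))))) + ((Zr ((f (c) * (z * c) + (z * c) * f (c) + (c) * f (z * c) + f (z * c) * (c)) *+ 2 - ((f ((c) * (z * c)) + f ((z * c) * (c))) *+ 2 + ((c) * (z * c) + (z * c) * (c)) * c + c * ((c) * (z * c) + (z * c) * (c))))) * y) + (y * (Zr ((f (c) * (z * c) + (z * c) * f (c) + (c) * f (z * c) + f (z * c) * (c)) *+ 2 - ((f ((c) * (z * c)) + f ((z * c) * (c))) *+ 2 + ((c) * (z * c) + (z * c) * (c)) * c + c * ((c) * (z * c) + (z * c) * (c)))))) + ((Zr ((f (c) * (c * y) + (c * y) * f (c) + (c) * f (c * y) + f (c * y) * (c)) *+ 2 - ((f ((c) * (c * y)) + f ((c * y) * (c))) *+ 2 + ((c) * (c * y) + (c * y) * (c)) * c + c * ((c) * (c * y) + (c * y) * (c))))) * z) + (z * (Zr ((f (c) * (c * y) + (c * y) * f (c) + (c) * f (c * y) + f (c * y) * (c)) *+ 2 - ((f ((c)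 * (c * y)) + f ((c * y) * (c))) *+ 2 + ((c) * (c * y) + (c * y) * (c)) * c + c * ((c) * (c * y) + (c * y) * (c)))))) + ((Zr ((f (c) * (y * c) + (y * c) * f (c) + (c) * f (y * c) + f (y * c) * (c)) *+ 2 - ((f ((c) * (y * c)) + f ((y * c) * (c))) *+ 2 + ((c) * (y * c) + (y * c) * (c)) * c + c * ((c) * (y * c) + (y * c) * (c))))) * z) + (z * (Zr ((f (c) * (y * c) + (y * c) * f (c) + (c) * f (y * c) + f (y * c) * (c)) *+ 2 - ((f ((c) * (y * c)) + f ((y * c) * (c))) *+ 2 + ((c) * (y * c) + (y * c) * (c)) * c + c * ((c) * (y * c) + (y * c) * (c)))))) + ((Zr ((f (c) * (y * z * c) + (y * z * c) * f (c) + (c) * f (y * z * c) + f (y * z * c) * (c)) *+ 2 - ((f ((c) * (y * z * c)) + f ((y * z * c) * (c))) *+ 2 + ((c) * (y * z * c) + (y * z * c) * (c)) * c + c * ((c) * (y * z * c) + (y * z * c) * (c)))))) + ((Zr ((f (c) * (z * y * c) + (z * y * c) * f (c) + (c) * f (z * y * c) + f (z * y * c) * (c)) *+ 2 - ((f ((c) * (z * y * c)) + f ((z * y * c) * (c))) *+ 2 + ((c) * (z * y * c) + (z * y * c) * (c)) * c + c * ((c) * (z * y * c) + (z * y * c) * (c)))))) + ((Zr ((f (c) * (c * y * z) + (c * y * z) * f (c) + (c) * f (c * y * z) + f (c * y * z) * (c)) *+ 2 - ((f ((c) * (c * y * z)) + f ((c * y * z) * (c))) *+ 2 + ((c) * (c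 * y * z) + (c * y * z) * (c)) * c + c * ((c) * (c * y * z) + (c * y * z) * (c)))))) + ((Zr ((f (c) * (c * z * y) + (c * z * y) * f (c) + (c) * f (c * z * y) + f (c * z * y) * (c)) *+ 2 - ((f ((c) * (c * z * y)) + f ((c * z * y) * (c))) *+ 2 + ((c) * (c * z * y) + (c * z * y) * (c)) * c + c * ((c) * (c * z * y) + (c * z * y) * (c)))))) - ((Zr ((f (c * z) * (y * c) + (y * c) * f (c * z) + (c * z) * f (y * c) + f (y * c) * (c * z)) *+ 2 - ((f ((c * z) * (y * c)) + f ((y * c) * (c * z))) *+ 2 + ((c * z) * (y * c) + (y * c) * (c * z)) * c + c * ((c * z) * (y * c) + (y * c) * (c * z)))))) *+ 2 - ((Zr ((f (c * y) * (c * z) + (c * z) * f (c * y) + (c * y) * f (c * z) + f (c * z) * (c * y)) *+ 2 - ((f ((c * y) * (c * z)) + f ((c * z) * (c * y))) *+ 2 + ((c * y) * (c * z) + (c * z) * (c * y)) * c + c * ((c * y) * (c * z) + (c * z) * (c * y)))))) *+ 2 - ((Zr ((f (c * y) * (z * c) + (z * c) * f (c * y) + (c * y) * f (z * c) + f (z * c) * (c * y)) *+ 2 - ((f ((c * y) * (z * c)) + f ((z * c) * (c * y))) *+ 2 + ((c * y) * (z * c) + (z * c) * (c * y)) * c + c * ((c * y) * (z * c) + (z * c) * (c * y)))))) *+ 2 - ((Zr ((f (y * c) * (z * c) + (z * c) * f (y * c) + (y * c) * f (z * c) + f (z * c) * (y * c)) *+ 2 - ((f ((y * c) * (z * c)) +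 f ((z * c) * (y * c))) *+ 2 + ((y * c) * (z * c) + (z * c) * (y * c)) * c + c * ((y * c) * (z * c) + (z * c) * (y * c)))))) *+ 2 - ((Zr ((f (c * c) * (z * y) + (z * y) * f (c * c) + (c * c) * f (z * y) + f (z * y) * (c * c)) *+ 2 - ((f ((c * c) * (z * y)) + f ((z * y) * (c * c))) *+ 2 + ((c * c) * (z * y) + (z * y) * (c * c)) * c + c * ((c * c) * (z * y) + (z * y) * (c * c)))))) *+ 2 - ((Zr ((f (c * c) * (y * z) + (y * z) * f (c * c) + (c * c) * f (y * z) + f (y * z) * (c * c)) *+ 2 - ((f ((c * c) * (y * z)) + f ((y * z) * (c * c))) *+ 2 + ((c * c) * (y * z) + (y * z) * (c * c)) * c + c * ((c * c) * (y * z) + (y * z) * (c * c)))))) *+ 2 + ((Zr ((f (c * c * z) * (y) + (y) * f (c * c * z) + (c * c * z) * f (y) + f (y) * (c * c * z)) *+ 2 - ((f ((c * c * z) * (y)) + f ((y) * (c * c * z))) *+ 2 + ((c * c * z) * (y) + (y) * (c * c * z)) * c + c * ((c * c * z) * (y) + (y) * (c * c * z)))))) + ((Zr ((f (c * z * c) * (y) + (y) * f (c * z * c) + (c * z * c) * f (y) + f (y) * (c * z * c)) *+ 2 - ((f ((c * z * c) * (y)) + f ((y) * (c * z * c))) *+ 2 + ((c * z * c) * (y) + (y) * (c * z * c)) * c + c * ((c * z * c) * (y) + (y) * (c * z * c)))))) *+ 2 + ((Zr ((f (y * c * c) * (z) + (z) * f (y * c * c) + (y * c * c) * f (z) + f (z)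 * (y * c * c)) *+ 2 - ((f ((y * c * c) * (z)) + f ((z) * (y * c * c))) *+ 2 + ((y * c * c) * (z) + (z) * (y * c * c)) * c + c * ((y * c * c) * (z) + (z) * (y * c * c)))))) + ((Zr ((f (c * y * c) * (z) + (z) * f (c * y * c) + (c * y * c) * f (z) + f (z) * (c * y * c)) *+ 2 - ((f ((c * y * c) * (z)) + f ((z) * (c * y * c))) *+ 2 + ((c * y * c) * (z) + (z) * (c * y * c)) * c + c * ((c * y * c) * (z) + (z) * (c * y * c)))))) *+ 2 + ((Zr ((f (c * c * y) * (z) + (z) * f (c * c * y) + (c * c * y) * f (z) + f (z) * (c * c * y)) *+ 2 - ((f ((c * c * y) * (z)) + f ((z) * (c * c * y))) *+ 2 + ((c * c * y) * (z) + (z) * (c * c * y)) * c + c * ((c * c * y) * (z) + (z) * (c * c * y))))))); last by rewrite /Zr; nc_ringf f hfadd.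
  by rewrite !R1zZ !(mulr0, mul0r, mul0rn, oppr0, addr0).
Qed.

Lemma T21 y z : D (y * D (D z) - D (D z) * y) + D (D (y * D z - D z * y)) = 0.
Proof.
rewrite /Dc.
  apply: (@cert_close _ _ 1).
  rewrite [LHS](_ : _ = ((Zr ((f (y) * (z) + (z) * f (y) + (y) * f (z) + f (z) * (y)) *+ 2 - ((f ((y) * (z)) + f ((z) * (y))) *+ 2 + ((y) * (z) + (z) * (y)) * c + c * ((y) * (z) + (z) * (y))))) * c * c) - (c * (Zr ((f (y) * (z) + (z) * f (y) + (y) * f (z) + f (z) * (y)) *+ 2 - ((f ((y) * (z)) + f ((z) * (y))) *+ 2 + ((y) * (z) + (z) * (y)) * c + c * ((y) * (z) + (z) * (y))))) * c) *+ 2 + (c * c * (Zr ((f (y) * (z) + (z) * f (y) + (y) * f (z) + f (z) * (y)) *+ 2 - ((f ((y) * (z)) + f ((z) * (y))) *+ 2 + ((y) * (z) + (z) * (y)) * c + c * ((y) * (z) + (z) * (y)))))) - ((Zr ((f (y) * (z * c) + (z * c) * f (y) + (y) * f (z * c) + f (z * c) * (y)) *+ 2 - ((f ((y) * (z * c)) + f ((z * c) * (y))) *+ 2 + ((y) * (z * c) + (z * c) * (y)) * c + c * ((y) * (z * c) + (z * c) * (y))))) * c) *+ 2 - (c * (Zr ((f (y) * (z * c) + (z * c) * f (y) + (y) * f (z * c) + f (z * c) * (y)) *+ 2 - ((f ((y) * (z * c)) + f ((z * c) * (y))) *+ 2 + ((y) * (z * c) + (z * c) * (y)) * c + c * ((y)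 * (z * c) + (z * c) * (y)))))) *+ 2 + ((Zr ((f (y) * (z * c * c) + (z * c * c) * f (y) + (y) * f (z * c * c) + f (z * c * c) * (y)) *+ 2 - ((f ((y) * (z * c * c)) + f ((z * c * c) * (y))) *+ 2 + ((y) * (z * c * c) + (z * c * c) * (y)) * c + c * ((y) * (z * c * c) + (z * c * c) * (y)))))) + ((Zr ((f (c) * (z) + (z) * f (c) + (c) * f (z) + f (z) * (c)) *+ 2 - ((f ((c) * (z)) + f ((z) * (c))) *+ 2 + ((c) * (z) + (z) * (c)) * c + c * ((c) * (z) + (z) * (c))))) * c * y) - (y * (Zr ((f (c) * (z) + (z) * f (c) + (c) * f (z) + f (z) * (c)) *+ 2 - ((f ((c) * (z)) + f ((z) * (c))) *+ 2 + ((c) * (z) + (z) * (c)) * c + c * ((c) * (z) + (z) * (c))))) * c) *+ 3 - (c * (Zr ((f (c) * (z) + (z) * f (c) + (c) * f (z) + f (z) * (c)) *+ 2 - ((f ((c) * (z)) + f ((z) * (c))) *+ 2 + ((c) * (z) + (z) * (c)) * c + c * ((c) * (z) + (z) * (c))))) * y) *+ 3 + (y * c * (Zr ((f (c) * (z) + (z) * f (c) + (c) * f (z) + f (z) * (c)) *+ 2 - ((f ((c) * (z)) + f ((z) * (c))) *+ 2 + ((c) * (z) + (z) * (c)) * c + c * ((c) * (z) + (z) * (c)))))) + ((Zr ((f (c) * (y) + (y) * f (c) + (c) * f (y) + f (y) * (c)) *+ 2 - ((f ((c) * (y)) + f ((y) * (c))) *+ 2 + ((c) * (y) + (y) * (c))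 * c + c * ((c) * (y) + (y) * (c))))) * c * z) + ((Zr ((f (c) * (y) + (y) * f (c) + (c) * f (y) + f (y) * (c)) *+ 2 - ((f ((c) * (y)) + f ((y) * (c))) *+ 2 + ((c) * (y) + (y) * (c)) * c + c * ((c) * (y) + (y) * (c))))) * z * c) *+ 4 + (z * (Zr ((f (c) * (y) + (y) * f (c) + (c) * f (y) + f (y) * (c)) *+ 2 - ((f ((c) * (y)) + f ((y) * (c))) *+ 2 + ((c) * (y) + (y) * (c)) * c + c * ((c) * (y) + (y) * (c))))) * c) + (c * (Zr ((f (c) * (y) + (y) * f (c) + (c) * f (y) + f (y) * (c)) *+ 2 - ((f ((c) * (y)) + f ((y) * (c))) *+ 2 + ((c) * (y) + (y) * (c)) * c + c * ((c) * (y) + (y) * (c))))) * z) + (c * z * (Zr ((f (c) * (y) + (y) * f (c) + (c) * f (y) + f (y) * (c)) *+ 2 - ((f ((c) * (y)) + f ((y) * (c))) *+ 2 + ((c) * (y) + (y) * (c)) * c + c * ((c) * (y) + (y) * (c)))))) *+ 4 + (z * c * (Zr ((f (c) * (y) + (y) * f (c) + (c) * f (y) + f (y) * (c)) *+ 2 - ((f ((c) * (y)) + f ((y) * (c))) *+ 2 + ((c) * (y) + (y) * (c)) * c + c * ((c) * (y) + (y) * (c)))))) - ((Zr ((f (c) * (z * y) + (z * y) * f (c) + (c) * f (z * y) + f (z * y) * (c)) *+ 2 - ((f ((c) * (z * y)) + f ((z * y) * (c))) *+ 2 + ((c) * (z * y) + (z * y) * (c)) * c + c * ((c) * (z * y)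 + (z * y) * (c))))) * c) - (c * (Zr ((f (c) * (z * y) + (z * y) * f (c) + (c) * f (z * y) + f (z * y) * (c)) *+ 2 - ((f ((c) * (z * y)) + f ((z * y) * (c))) *+ 2 + ((c) * (z * y) + (z * y) * (c)) * c + c * ((c) * (z * y) + (z * y) * (c)))))) - ((Zr ((f (c) * (y * z) + (y * z) * f (c) + (c) * f (y * z) + f (y * z) * (c)) *+ 2 - ((f ((c) * (y * z)) + f ((y * z) * (c))) *+ 2 + ((c) * (y * z) + (y * z) * (c)) * c + c * ((c) * (y * z) + (y * z) * (c))))) * c) - (c * (Zr ((f (c) * (y * z) + (y * z) * f (c) + (c) * f (y * z) + f (y * z) * (c)) *+ 2 - ((f ((c) * (y * z)) + f ((y * z) * (c))) *+ 2 + ((c) * (y * z) + (y * z) * (c)) * c + c * ((c) * (y * z) + (y * z) * (c)))))) + ((Zr ((f (c) * (c) + (c) * f (c) + (c) * f (c) + f (c) * (c)) *+ 2 - ((f ((c) * (c)) + f ((c) * (c))) *+ 2 + ((c) * (c) + (c) * (c)) * c + c * ((c) * (c) + (c) * (c))))) * z * y) *+ 2 + (y * z * (Zr ((f (c) * (c) + (c) * f (c) + (c) * f (c) + f (c) * (c)) *+ 2 - ((f ((c) * (c)) + f ((c) * (c))) *+ 2 + ((c) * (c) + (c) * (c)) * c + c * ((c) * (c) + (c) * (c)))))) *+ 2 - ((Zr ((f (c) * (c * z) + (c * z) * f (c) + (c) * f (c * z) + f (c * z) * (c)) *+ 2 - ((f ((c) * (c * z)) + f ((c * z) * (c))) *+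 2 + ((c) * (c * z) + (c * z) * (c)) * c + c * ((c) * (c * z) + (c * z) * (c))))) * y) - (y * (Zr ((f (c) * (c * z) + (c * z) * f (c) + (c) * f (c * z) + f (c * z) * (c)) *+ 2 - ((f ((c) * (c * z)) + f ((c * z) * (c))) *+ 2 + ((c) * (c * z) + (c * z) * (c)) * c + c * ((c) * (c * z) + (c * z) * (c)))))) - ((Zr ((f (c) * (z * c) + (z * c) * f (c) + (c) * f (z * c) + f (z * c) * (c)) *+ 2 - ((f ((c) * (z * c)) + f ((z * c) * (c))) *+ 2 + ((c) * (z * c) + (z * c) * (c)) * c + c * ((c) * (z * c) + (z * c) * (c))))) * y) - (y * (Zr ((f (c) * (z * c) + (z * c) * f (c) + (c) * f (z * c) + f (z * c) * (c)) *+ 2 - ((f ((c) * (z * c)) + f ((z * c) * (c))) *+ 2 + ((c) * (z * c) + (z * c) * (c)) * c + c * ((c) * (z * c) + (z * c) * (c)))))) - ((Zr ((f (c) * (c * y) + (c * y) * f (c) + (c) * f (c * y) + f (c * y) * (c)) *+ 2 - ((f ((c) * (c * y)) + f ((c * y) * (c))) *+ 2 + ((c) * (c * y) + (c * y) * (c)) * c + c * ((c) * (c * y) + (c * y) * (c))))) * z) - (z * (Zr ((f (c) * (c * y) + (c * y) * f (c) + (c) * f (c * y) + f (c * y) * (c)) *+ 2 - ((f ((c) * (c * y)) + f ((c * y) * (c))) *+ 2 + ((c) * (c * y) + (c * y) * (c)) * c + c * ((c) * (c * y) + (c * y) * (c)))))) - ((Zr ((f (c) * (y * c) + (y * c) *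 f (c) + (c) * f (y * c) + f (y * c) * (c)) *+ 2 - ((f ((c) * (y * c)) + f ((y * c) * (c))) *+ 2 + ((c) * (y * c) + (y * c) * (c)) * c + c * ((c) * (y * c) + (y * c) * (c))))) * z) - (z * (Zr ((f (c) * (y * c) + (y * c) * f (c) + (c) * f (y * c) + f (y * c) * (c)) *+ 2 - ((f ((c) * (y * c)) + f ((y * c) * (c))) *+ 2 + ((c) * (y * c) + (y * c) * (c)) * c + c * ((c) * (y * c) + (y * c) * (c)))))) - ((Zr ((f (c) * (y * z * c) + (y * z * c) * f (c) + (c) * f (y * z * c) + f (y * z * c) * (c)) *+ 2 - ((f ((c) * (y * z * c)) + f ((y * z * c) * (c))) *+ 2 + ((c) * (y * z * c) + (y * z * c) * (c)) * c + c * ((c) * (y * z * c) + (y * z * c) * (c)))))) *+ 3 + ((Zr ((f (c) * (z * y * c) + (z * y * c) * f (c) + (c) * f (z * y * c) + f (z * y * c) * (c)) *+ 2 - ((f ((c) * (z * y * c)) + f ((z * y * c) * (c))) *+ 2 + ((c) * (z * y * c) + (z * y * c) * (c)) * c + c * ((c) * (z * y * c) + (z * y * c) * (c)))))) + ((Zr ((f (c) * (c * y * z) + (c * y * z) * f (c) + (c) * f (c * y * z) + f (c * y * z) * (c)) *+ 2 - ((f ((c) * (c * y * z)) + f ((c * y * z) * (c))) *+ 2 + ((c) * (c * y * z) + (c * y * z) * (c)) * c + c * ((c) * (c * y * z) + (c * y * z) * (c)))))) - ((Zr ((f (c) * (c * z * y) + (c * z * y) * f (c) + (c) * f (c * z *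 y) + f (c * z * y) * (c)) *+ 2 - ((f ((c) * (c * z * y)) + f ((c * z * y) * (c))) *+ 2 + ((c) * (c * z * y) + (c * z * y) * (c)) * c + c * ((c) * (c * z * y) + (c * z * y) * (c)))))) *+ 3 - ((Zr ((f (c * z) * (y) + (y) * f (c * z) + (c * z) * f (y) + f (y) * (c * z)) *+ 2 - ((f ((c * z) * (y)) + f ((y) * (c * z))) *+ 2 + ((c * z) * (y) + (y) * (c * z)) * c + c * ((c * z) * (y) + (y) * (c * z))))) * c) *+ 2 - (c * (Zr ((f (c * z) * (y) + (y) * f (c * z) + (c * z) * f (y) + f (y) * (c * z)) *+ 2 - ((f ((c * z) * (y)) + f ((y) * (c * z))) *+ 2 + ((c * z) * (y) + (y) * (c * z)) * c + c * ((c * z) * (y) + (y) * (c * z)))))) *+ 2 + ((Zr ((f (c * z) * (y * c) + (y * c) * f (c * z) + (c * z) * f (y * c) + f (y * c) * (c * z)) *+ 2 - ((f ((c * z) * (y * c)) + f ((y * c) * (c * z))) *+ 2 + ((c * z) * (y * c) + (y * c) * (c * z)) * c + c * ((c * z) * (y * c) + (y * c) * (c * z)))))) *+ 2 + ((Zr ((f (c * y) * (z) + (z) * f (c * y) + (c * y) * f (z) + f (z) * (c * y)) *+ 2 - ((f ((c * y) * (z)) + f ((z) * (c * y))) *+ 2 + ((c * y) * (z) + (z) * (c * y)) * c + c * ((c * y) * (z) + (z) * (c * y))))) * c) *+ 2 + (c * (Zr ((f (c * y) * (z) + (z) * f (c * y) + (c * y) * f (z) + f (z) * (c * y)) *+ 2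 - ((f ((c * y) * (z)) + f ((z) * (c * y))) *+ 2 + ((c * y) * (z) + (z) * (c * y)) * c + c * ((c * y) * (z) + (z) * (c * y)))))) *+ 2 + ((Zr ((f (c * y) * (c * z) + (c * z) * f (c * y) + (c * y) * f (c * z) + f (c * z) * (c * y)) *+ 2 - ((f ((c * y) * (c * z)) + f ((c * z) * (c * y))) *+ 2 + ((c * y) * (c * z) + (c * z) * (c * y)) * c + c * ((c * y) * (c * z) + (c * z) * (c * y)))))) *+ 2 + ((Zr ((f (c * y) * (z * c) + (z * c) * f (c * y) + (c * y) * f (z * c) + f (z * c) * (c * y)) *+ 2 - ((f ((c * y) * (z * c)) + f ((z * c) * (c * y))) *+ 2 + ((c * y) * (z * c) + (z * c) * (c * y)) * c + c * ((c * y) * (z * c) + (z * c) * (c * y)))))) *+ 2 + ((Zr ((f (y * c) * (z) + (z) * f (y * c) + (y * c) * f (z) + f (z) * (y * c)) *+ 2 - ((f ((y * c) * (z)) + f ((z) * (y * c))) *+ 2 + ((y * c) * (z) + (z) * (y * c)) * c + c * ((y * c) * (z) + (z) * (y * c))))) * c) *+ 2 + (c * (Zr ((f (y * c) * (z) + (z) * f (y * c) + (y * c) * f (z) + f (z) * (y * c)) *+ 2 - ((f ((y * c) * (z)) + f ((z) * (y * c))) *+ 2 + ((y * c) * (z) + (z) * (y * c)) * c + c * ((y * c) * (z) + (z) * (y * c)))))) *+ 2 + ((Zr ((f (y * c) * (z * c) + (z * c) * f (y * c) + (y * c) * f (z * c) + f (z * c) * (y * c)) *+ 2 - ((f ((y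 * c) * (z * c)) + f ((z * c) * (y * c))) *+ 2 + ((y * c) * (z * c) + (z * c) * (y * c)) * c + c * ((y * c) * (z * c) + (z * c) * (y * c)))))) *+ 2 + ((Zr ((f (c * c) * (z) + (z) * f (c * c) + (c * c) * f (z) + f (z) * (c * c)) *+ 2 - ((f ((c * c) * (z)) + f ((z) * (c * c))) *+ 2 + ((c * c) * (z) + (z) * (c * c)) * c + c * ((c * c) * (z) + (z) * (c * c))))) * y) *+ 2 + (y * (Zr ((f (c * c) * (z) + (z) * f (c * c) + (c * c) * f (z) + f (z) * (c * c)) *+ 2 - ((f ((c * c) * (z)) + f ((z) * (c * c))) *+ 2 + ((c * c) * (z) + (z) * (c * c)) * c + c * ((c * c) * (z) + (z) * (c * c)))))) *+ 2 - ((Zr ((f (c * c) * (y) + (y) * f (c * c) + (c * c) * f (y) + f (y) * (c * c)) *+ 2 - ((f ((c * c) * (y)) + f ((y) * (c * c))) *+ 2 + ((c * c) * (y) + (y) * (c * c)) * c + c * ((c * c) * (y) + (y) * (c * c))))) * z) *+ 2 - (z * (Zr ((f (c * c) * (y) + (y) * f (c * c) + (c * c) * f (y) + f (y) * (c * c)) *+ 2 - ((f ((c * c) * (y)) + f ((y) * (c * c))) *+ 2 + ((c * c) * (y) + (y) * (c * c)) * c + c * ((c * c) * (y) + (y) * (c * c)))))) *+ 2 + ((Zr ((f (c * c) * (z * y) + (z * y) * f (c * c) + (c * c) * f (z * y) + f (z * y) * (c * c)) *+ 2 - ((f ((c * c) * (z * y)) + f ((z * y) * (c * c))) *+ 2 +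 ((c * c) * (z * y) + (z * y) * (c * c)) * c + c * ((c * c) * (z * y) + (z * y) * (c * c)))))) *+ 2 + ((Zr ((f (c * c) * (y * z) + (y * z) * f (c * c) + (c * c) * f (y * z) + f (y * z) * (c * c)) *+ 2 - ((f ((c * c) * (y * z)) + f ((y * z) * (c * c))) *+ 2 + ((c * c) * (y * z) + (y * z) * (c * c)) * c + c * ((c * c) * (y * z) + (y * z) * (c * c)))))) *+ 2 + ((Zr ((f (c * c * z) * (y) + (y) * f (c * c * z) + (c * c * z) * f (y) + f (y) * (c * c * z)) *+ 2 - ((f ((c * c * z) * (y)) + f ((y) * (c * c * z))) *+ 2 + ((c * c * z) * (y) + (y) * (c * c * z)) * c + c * ((c * c * z) * (y) + (y) * (c * c * z)))))) - ((Zr ((f (c * z * c) * (y) + (y) * f (c * z * c) + (c * z * c) * f (y) + f (y) * (c * z * c)) *+ 2 - ((f ((c * z * c) * (y)) + f ((y) * (c * z * c))) *+ 2 + ((c * z * c) * (y) + (y) * (c * z * c)) * c + c * ((c * z * c) * (y) + (y) * (c * z * c)))))) *+ 2 - ((Zr ((f (y * c * c) * (z) + (z) * f (y * c * c) + (y * c * c) * f (z) + f (z) * (y * c * c)) *+ 2 - ((f ((y * c * c) * (z)) + f ((z) * (y * c * c))) *+ 2 + ((y * c * c) * (z) + (z) * (y * c * c)) * c + c * ((y * c * c) * (z) + (z) * (y * c * c)))))) *+ 3 - ((Zr ((f (c * y * c) * (z) + (z) * f (c * y * c) + (c * y * c) * f (z) + f (z) * (c * y * c)) *+ 2 - ((f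 ((c * y * c) * (z)) + f ((z) * (c * y * c))) *+ 2 + ((c * y * c) * (z) + (z) * (c * y * c)) * c + c * ((c * y * c) * (z) + (z) * (c * y * c)))))) *+ 2 - ((Zr ((f (c * c * y) * (z) + (z) * f (c * c * y) + (c * c * y) * f (z) + f (z) * (c * c * y)) *+ 2 - ((f ((c * c * y) * (z)) + f ((z) * (c * c * y))) *+ 2 + ((c * c * y) * (z) + (z) * (c * c * y)) * c + c * ((c * c * y) * (z) + (z) * (c * c * y)))))) *+ 3); last by rewrite /Zr; nc_ringf f hfadd.
  by rewrite !R1zZ !(mulr0, mul0r, mul0rn, oppr0, addr0).
Qed.

Lemma T31 y z : (y * D (D (D z)) - D (D (D z)) * y) + (D (D (y * D z - D z * y))) *+ 2 = 0.
Proof.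
rewrite /Dc.
  apply: (@cert_close _ _ 1).
  rewrite [LHS](_ : _ = ((Zr ((f (y) * (z) + (z) * f (y) + (y) * f (z) + f (z) * (y)) *+ 2 - ((f ((y) * (z)) + f ((z) * (y))) *+ 2 + ((y) * (z) + (z) * (y)) * c + c * ((y) * (z) + (z) * (y))))) * c * c) *+ 3 - (c * (Zr ((f (y) * (z) + (z) * f (y) + (y) * f (z) + f (z) * (y)) *+ 2 - ((f ((y) * (z)) + f ((z) * (y))) *+ 2 + ((y) * (z) + (z) * (y)) * c + c * ((y) * (z) + (z) * (y))))) * c) *+ 2 + (c * c * (Zr ((f (y) * (z) + (z) * f (y) + (y) * f (z) + f (z) * (y)) *+ 2 - ((f ((y) * (z)) + f ((z) * (y))) *+ 2 + ((y) * (z) + (z) * (y)) * c + c * ((y) * (z) + (z) * (y)))))) *+ 3 - ((Zr ((f (y) * (z * c) + (z * c) * f (y) + (y) * f (z * c) + f (z * c) * (y)) *+ 2 - ((f ((y) * (z * c)) + f ((z * c) * (y))) *+ 2 + ((y) * (z * c) + (z * c) * (y)) * c + c * ((y) * (z * c) + (z * c) * (y))))) * c) *+ 4 - (c * (Zr ((f (y) * (z * c) + (z * c) * f (y) + (y) * f (z * c) + f (z * c) * (y)) *+ 2 - ((f ((y) * (z * c)) + f ((z * c) * (y))) *+ 2 + ((y) * (z * c) + (z * c) * (y)) * c + c * ((y) * (z * c) + (z * c) * (y)))))) *+ 4 + ((Zr ((f (y) * (z * c * c) + (z * c * c) * f (y) + (y) * f (z * c * c) + f (z * c * c) * (y)) *+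 2 - ((f ((y) * (z * c * c)) + f ((z * c * c) * (y))) *+ 2 + ((y) * (z * c * c) + (z * c * c) * (y)) * c + c * ((y) * (z * c * c) + (z * c * c) * (y)))))) + ((Zr ((f (c) * (z) + (z) * f (c) + (c) * f (z) + f (z) * (c)) *+ 2 - ((f ((c) * (z)) + f ((z) * (c))) *+ 2 + ((c) * (z) + (z) * (c)) * c + c * ((c) * (z) + (z) * (c))))) * c * y) *+ 3 - (y * (Zr ((f (c) * (z) + (z) * f (c) + (c) * f (z) + f (z) * (c)) *+ 2 - ((f ((c) * (z)) + f ((z) * (c))) *+ 2 + ((c) * (z) + (z) * (c)) * c + c * ((c) * (z) + (z) * (c))))) * c) *+ 5 - (c * (Zr ((f (c) * (z) + (z) * f (c) + (c) * f (z) + f (z) * (c)) *+ 2 - ((f ((c) * (z)) + f ((z) * (c))) *+ 2 + ((c) * (z) + (z) * (c)) * c + c * ((c) * (z) + (z) * (c))))) * y) *+ 5 + (y * c * (Zr ((f (c) * (z) + (z) * f (c) + (c) * f (z) + f (z) * (c)) *+ 2 - ((f ((c) * (z)) + f ((z) * (c))) *+ 2 + ((c) * (z) + (z) * (c)) * c + c * ((c) * (z) + (z) * (c)))))) *+ 3 + ((Zr ((f (c) * (y) + (y) * f (c) + (c) * f (y) + f (y) * (c)) *+ 2 - ((f ((c) * (y)) + f ((y) * (c))) *+ 2 + ((c) * (y) + (y) * (c)) * c + c * ((c) * (y) + (y) * (c))))) * c * z) *+ 3 + ((Zr ((f (c) * (y) + (y) * f (c) + (c) * f (y) + f (y) * (c))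 *+ 2 - ((f ((c) * (y)) + f ((y) * (c))) *+ 2 + ((c) * (y) + (y) * (c)) * c + c * ((c) * (y) + (y) * (c))))) * z * c) *+ 6 + (z * (Zr ((f (c) * (y) + (y) * f (c) + (c) * f (y) + f (y) * (c)) *+ 2 - ((f ((c) * (y)) + f ((y) * (c))) *+ 2 + ((c) * (y) + (y) * (c)) * c + c * ((c) * (y) + (y) * (c))))) * c) + (c * (Zr ((f (c) * (y) + (y) * f (c) + (c) * f (y) + f (y) * (c)) *+ 2 - ((f ((c) * (y)) + f ((y) * (c))) *+ 2 + ((c) * (y) + (y) * (c)) * c + c * ((c) * (y) + (y) * (c))))) * z) + (c * z * (Zr ((f (c) * (y) + (y) * f (c) + (c) * f (y) + f (y) * (c)) *+ 2 - ((f ((c) * (y)) + f ((y) * (c))) *+ 2 + ((c) * (y) + (y) * (c)) * c + c * ((c) * (y) + (y) * (c)))))) *+ 6 + (z * c * (Zr ((f (c) * (y) + (y) * f (c) + (c) * f (y) + f (y) * (c)) *+ 2 - ((f ((c) * (y)) + f ((y) * (c))) *+ 2 + ((c) * (y) + (y) * (c)) * c + c * ((c) * (y) + (y) * (c)))))) *+ 3 - ((Zr ((f (c) * (z * y) + (z * y) * f (c) + (c) * f (z * y) + f (z * y) * (c)) *+ 2 - ((f ((c) * (z * y)) + f ((z * y) * (c))) *+ 2 + ((c) * (z * y) + (z * y) * (c)) * c + c * ((c) * (z * y) + (z * y) * (c))))) * c) - (c * (Zr ((f (c) * (z * y) + (z * y) * f (c) + (c) * f (z * y) + f (z * y) * (c))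 *+ 2 - ((f ((c) * (z * y)) + f ((z * y) * (c))) *+ 2 + ((c) * (z * y) + (z * y) * (c)) * c + c * ((c) * (z * y) + (z * y) * (c)))))) - ((Zr ((f (c) * (y * z) + (y * z) * f (c) + (c) * f (y * z) + f (y * z) * (c)) *+ 2 - ((f ((c) * (y * z)) + f ((y * z) * (c))) *+ 2 + ((c) * (y * z) + (y * z) * (c)) * c + c * ((c) * (y * z) + (y * z) * (c))))) * c) - (c * (Zr ((f (c) * (y * z) + (y * z) * f (c) + (c) * f (y * z) + f (y * z) * (c)) *+ 2 - ((f ((c) * (y * z)) + f ((y * z) * (c))) *+ 2 + ((c) * (y * z) + (y * z) * (c)) * c + c * ((c) * (y * z) + (y * z) * (c)))))) + ((Zr ((f (c) * (c) + (c) * f (c) + (c) * f (c) + f (c) * (c)) *+ 2 - ((f ((c) * (c)) + f ((c) * (c))) *+ 2 + ((c) * (c) + (c) * (c)) * c + c * ((c) * (c) + (c) * (c))))) * z * y) *+ 3 - (z * (Zr ((f (c) * (c) + (c) * f (c) + (c) * f (c) + f (c) * (c)) *+ 2 - ((f ((c) * (c)) + f ((c) * (c))) *+ 2 + ((c) * (c) + (c) * (c)) * c + c * ((c) * (c) + (c) * (c))))) * y) - (y * (Zr ((f (c) * (c) + (c) * f (c) + (c) * f (c) + f (c) * (c)) *+ 2 - ((f ((c) * (c)) + f ((c) * (c))) *+ 2 + ((c) * (c) + (c) * (c)) * c + c * ((c) * (c) + (c) * (c))))) * z) + (y * z * (Zr ((f (c) * (c) + (c) * f (c) + (c) * f (c)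 + f (c) * (c)) *+ 2 - ((f ((c) * (c)) + f ((c) * (c))) *+ 2 + ((c) * (c) + (c) * (c)) * c + c * ((c) * (c) + (c) * (c)))))) *+ 3 - ((Zr ((f (c) * (c * z) + (c * z) * f (c) + (c) * f (c * z) + f (c * z) * (c)) *+ 2 - ((f ((c) * (c * z)) + f ((c * z) * (c))) *+ 2 + ((c) * (c * z) + (c * z) * (c)) * c + c * ((c) * (c * z) + (c * z) * (c))))) * y) - (y * (Zr ((f (c) * (c * z) + (c * z) * f (c) + (c) * f (c * z) + f (c * z) * (c)) *+ 2 - ((f ((c) * (c * z)) + f ((c * z) * (c))) *+ 2 + ((c) * (c * z) + (c * z) * (c)) * c + c * ((c) * (c * z) + (c * z) * (c)))))) - ((Zr ((f (c) * (z * c) + (z * c) * f (c) + (c) * f (z * c) + f (z * c) * (c)) *+ 2 - ((f ((c) * (z * c)) + f ((z * c) * (c))) *+ 2 + ((c) * (z * c) + (z * c) * (c)) * c + c * ((c) * (z * c) + (z * c) * (c))))) * y) - (y * (Zr ((f (c) * (z * c) + (z * c) * f (c) + (c) * f (z * c) + f (z * c) * (c)) *+ 2 - ((f ((c) * (z * c)) + f ((z * c) * (c))) *+ 2 + ((c) * (z * c) + (z * c) * (c)) * c + c * ((c) * (z * c) + (z * c) * (c)))))) - ((Zr ((f (c) * (c * y) + (c * y) * f (c) + (c) * f (c * y) + f (c * y) * (c)) *+ 2 - ((f ((c) * (c * y)) + f ((c * y) * (c))) *+ 2 + ((c) * (c * y) + (c * y) * (c)) * c + c * ((c) * (c * y)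 + (c * y) * (c))))) * z) - (z * (Zr ((f (c) * (c * y) + (c * y) * f (c) + (c) * f (c * y) + f (c * y) * (c)) *+ 2 - ((f ((c) * (c * y)) + f ((c * y) * (c))) *+ 2 + ((c) * (c * y) + (c * y) * (c)) * c + c * ((c) * (c * y) + (c * y) * (c)))))) - ((Zr ((f (c) * (y * c) + (y * c) * f (c) + (c) * f (y * c) + f (y * c) * (c)) *+ 2 - ((f ((c) * (y * c)) + f ((y * c) * (c))) *+ 2 + ((c) * (y * c) + (y * c) * (c)) * c + c * ((c) * (y * c) + (y * c) * (c))))) * z) - (z * (Zr ((f (c) * (y * c) + (y * c) * f (c) + (c) * f (y * c) + f (y * c) * (c)) *+ 2 - ((f ((c) * (y * c)) + f ((y * c) * (c))) *+ 2 + ((c) * (y * c) + (y * c) * (c)) * c + c * ((c) * (y * c) + (y * c) * (c)))))) - ((Zr ((f (c) * (y * z * c) + (y * z * c) * f (c) + (c) * f (y * z * c) + f (y * z * c) * (c)) *+ 2 - ((f ((c) * (y * z * c)) + f ((y * z * c) * (c))) *+ 2 + ((c) * (y * z * c) + (y * z * c) * (c)) * c + c * ((c) * (y * z * c) + (y * z * c) * (c)))))) *+ 5 + ((Zr ((f (c) * (z * y * c) + (z * y * c) * f (c) + (c) * f (z * y * c) + f (z * y * c) * (c)) *+ 2 - ((f ((c) * (z * y * c)) + f ((z * y * c) * (c))) *+ 2 + ((c) * (z * y * c) + (z * y * c) * (c)) * c + c * ((c) * (z * y * c) + (z * y * c) * (c)))))) - ((Zr ((f (c) * (z * c * y) + (z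 * c * y) * f (c) + (c) * f (z * c * y) + f (z * c * y) * (c)) *+ 2 - ((f ((c) * (z * c * y)) + f ((z * c * y) * (c))) *+ 2 + ((c) * (z * c * y) + (z * c * y) * (c)) * c + c * ((c) * (z * c * y) + (z * c * y) * (c)))))) *+ 2 + ((Zr ((f (c) * (c * y * z) + (c * y * z) * f (c) + (c) * f (c * y * z) + f (c * y * z) * (c)) *+ 2 - ((f ((c) * (c * y * z)) + f ((c * y * z) * (c))) *+ 2 + ((c) * (c * y * z) + (c * y * z) * (c)) * c + c * ((c) * (c * y * z) + (c * y * z) * (c)))))) - ((Zr ((f (c) * (y * c * z) + (y * c * z) * f (c) + (c) * f (y * c * z) + f (y * c * z) * (c)) *+ 2 - ((f ((c) * (y * c * z)) + f ((y * c * z) * (c))) *+ 2 + ((c) * (y * c * z) + (y * c * z) * (c)) * c + c * ((c) * (y * c * z) + (y * c * z) * (c)))))) *+ 2 - ((Zr ((f (c) * (c * z * y) + (c * z * y) * f (c) + (c) * f (c * z * y) + f (c * z * y) * (c)) *+ 2 - ((f ((c) * (c * z * y)) + f ((c * z * y) * (c))) *+ 2 + ((c) * (c * z * y) + (c * z * y) * (c)) * c + c * ((c) * (c * z * y) + (c * z * y) * (c)))))) *+ 5 - ((Zr ((f (c * z) * (y) + (y) * f (c * z) + (c * z) * f (y) + f (y) * (c * z)) *+ 2 - ((f ((c * z) * (y)) + f ((y) * (c * z))) *+ 2 + ((c * z) * (y) + (y) * (c * z)) * c + c * ((c * z) * (y) + (y) * (c * z))))) * c) *+ 4 - (c * (Zr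 ((f (c * z) * (y) + (y) * f (c * z) + (c * z) * f (y) + f (y) * (c * z)) *+ 2 - ((f ((c * z) * (y)) + f ((y) * (c * z))) *+ 2 + ((c * z) * (y) + (y) * (c * z)) * c + c * ((c * z) * (y) + (y) * (c * z)))))) *+ 4 + ((Zr ((f (c * z) * (y * c) + (y * c) * f (c * z) + (c * z) * f (y * c) + f (y * c) * (c * z)) *+ 2 - ((f ((c * z) * (y * c)) + f ((y * c) * (c * z))) *+ 2 + ((c * z) * (y * c) + (y * c) * (c * z)) * c + c * ((c * z) * (y * c) + (y * c) * (c * z)))))) *+ 4 + ((Zr ((f (c * y) * (z) + (z) * f (c * y) + (c * y) * f (z) + f (z) * (c * y)) *+ 2 - ((f ((c * y) * (z)) + f ((z) * (c * y))) *+ 2 + ((c * y) * (z) + (z) * (c * y)) * c + c * ((c * y) * (z) + (z) * (c * y))))) * c) *+ 2 + (c * (Zr ((f (c * y) * (z) + (z) * f (c * y) + (c * y) * f (z) + f (z) * (c * y)) *+ 2 - ((f ((c * y) * (z)) + f ((z) * (c * y))) *+ 2 + ((c * y) * (z) + (z) * (c * y)) * c + c * ((c * y) * (z) + (z) * (c * y)))))) *+ 2 + ((Zr ((f (c * y) * (c * z) + (c * z) * f (c * y) + (c * y) * f (c * z) + f (c * z) * (c * y)) *+ 2 - ((f ((c * y) * (c * z)) + f ((c * z) * (c * y))) *+ 2 + ((c * y) * (c * z) + (c * z) * (c * y)) * c + c * ((c * y) * (c * z) + (c * z) * (c * y)))))) *+ 4 + ((Zr ((f (c * y) * (z * c) +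 (z * c) * f (c * y) + (c * y) * f (z * c) + f (z * c) * (c * y)) *+ 2 - ((f ((c * y) * (z * c)) + f ((z * c) * (c * y))) *+ 2 + ((c * y) * (z * c) + (z * c) * (c * y)) * c + c * ((c * y) * (z * c) + (z * c) * (c * y)))))) *+ 4 + ((Zr ((f (y * c) * (z) + (z) * f (y * c) + (y * c) * f (z) + f (z) * (y * c)) *+ 2 - ((f ((y * c) * (z)) + f ((z) * (y * c))) *+ 2 + ((y * c) * (z) + (z) * (y * c)) * c + c * ((y * c) * (z) + (z) * (y * c))))) * c) *+ 2 + (c * (Zr ((f (y * c) * (z) + (z) * f (y * c) + (y * c) * f (z) + f (z) * (y * c)) *+ 2 - ((f ((y * c) * (z)) + f ((z) * (y * c))) *+ 2 + ((y * c) * (z) + (z) * (y * c)) * c + c * ((y * c) * (z) + (z) * (y * c)))))) *+ 2 + ((Zr ((f (y * c) * (z * c) + (z * c) * f (y * c) + (y * c) * f (z * c) + f (z * c) * (y * c)) *+ 2 - ((f ((y * c) * (z * c)) + f ((z * c) * (y * c))) *+ 2 + ((y * c) * (z * c) + (z * c) * (y * c)) * c + c * ((y * c) * (z * c) + (z * c) * (y * c)))))) *+ 4 + ((Zr ((f (c * c) * (z) + (z) * f (c * c) + (c * c) * f (z) + f (z) * (c * c)) *+ 2 - ((f ((c * c) * (z)) + f ((z) * (c * c))) *+ 2 + ((c * c) * (z) + (z) * (c * c)) * c + c * ((c * c) * (z) + (z) * (c * c))))) * y) *+ 2 + (y * (Zr ((f (c * c) * (z) + (z) * f (c * c) + (c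 * c) * f (z) + f (z) * (c * c)) *+ 2 - ((f ((c * c) * (z)) + f ((z) * (c * c))) *+ 2 + ((c * c) * (z) + (z) * (c * c)) * c + c * ((c * c) * (z) + (z) * (c * c)))))) *+ 2 - ((Zr ((f (c * c) * (y) + (y) * f (c * c) + (c * c) * f (y) + f (y) * (c * c)) *+ 2 - ((f ((c * c) * (y)) + f ((y) * (c * c))) *+ 2 + ((c * c) * (y) + (y) * (c * c)) * c + c * ((c * c) * (y) + (y) * (c * c))))) * z) *+ 4 - (z * (Zr ((f (c * c) * (y) + (y) * f (c * c) + (c * c) * f (y) + f (y) * (c * c)) *+ 2 - ((f ((c * c) * (y)) + f ((y) * (c * c))) *+ 2 + ((c * c) * (y) + (y) * (c * c)) * c + c * ((c * c) * (y) + (y) * (c * c)))))) *+ 4 + ((Zr ((f (c * c) * (z * y) + (z * y) * f (c * c) + (c * c) * f (z * y) + f (z * y) * (c * c)) *+ 2 - ((f ((c * c) * (z * y)) + f ((z * y) * (c * c))) *+ 2 + ((c * c) * (z * y) + (z * y) * (c * c)) * c + c * ((c * c) * (z * y) + (z * y) * (c * c)))))) *+ 4 + ((Zr ((f (c * c) * (y * z) + (y * z) * f (c * c) + (c * c) * f (y * z) + f (y * z) * (c * c)) *+ 2 - ((f ((c * c) * (y * z)) + f ((y * z) * (c * c))) *+ 2 + ((c * c) * (y * z) + (y * z) * (c * c)) * c + c * ((c * c) * (y * z) + (y * z) * (c * c)))))) *+ 4 + ((Zr ((f (c * c * z) * (y) + (y) * f (c * c * z) + (c * c * z) * f (y) +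 f (y) * (c * c * z)) *+ 2 - ((f ((c * c * z) * (y)) + f ((y) * (c * c * z))) *+ 2 + ((c * c * z) * (y) + (y) * (c * c * z)) * c + c * ((c * c * z) * (y) + (y) * (c * c * z)))))) - ((Zr ((f (c * z * c) * (y) + (y) * f (c * z * c) + (c * z * c) * f (y) + f (y) * (c * z * c)) *+ 2 - ((f ((c * z * c) * (y)) + f ((y) * (c * z * c))) *+ 2 + ((c * z * c) * (y) + (y) * (c * z * c)) * c + c * ((c * z * c) * (y) + (y) * (c * z * c)))))) *+ 2 - ((Zr ((f (y * c * c) * (z) + (z) * f (y * c * c) + (y * c * c) * f (z) + f (z) * (y * c * c)) *+ 2 - ((f ((y * c * c) * (z)) + f ((z) * (y * c * c))) *+ 2 + ((y * c * c) * (z) + (z) * (y * c * c)) * c + c * ((y * c * c) * (z) + (z) * (y * c * c)))))) *+ 5 - ((Zr ((f (c * y * c) * (z) + (z) * f (c * y * c) + (c * y * c) * f (z) + f (z) * (c * y * c)) *+ 2 - ((f ((c * y * c) * (z)) + f ((z) * (c * y * c))) *+ 2 + ((c * y * c) * (z) + (z) * (c * y * c)) * c + c * ((c * y * c) * (z) + (z) * (c * y * c)))))) *+ 2 - ((Zr ((f (c * c * y) * (z) + (z) * f (c * c * y) + (c * c * y) * f (z) + f (z) * (c * c * y)) *+ 2 - ((f ((c * c * y) * (z)) + f ((z) * (c * c * y))) *+ 2 + ((c * c * y) * (z) + (z) * (c * c * y)) * c + c * ((c * c * y) * (z) + (z) * (c * c * y)))))) *+ 5); last by rewrite /Zr; nc_ringf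 f hfadd.
  by rewrite !R1zZ !(mulr0, mul0r, mul0rn, oppr0, addr0).
Qed.


Lemma I1 y : D (D (D (D y))) = 0.
Proof.
rewrite [LHS](_ : _ = - (D (D (D (y * c - c * y))) - (D (D (y * D c - D c * y))) *+ 2));
  last by rewrite /Dc; nc_ring.
by rewrite T01 oppr0.
Qed.

Lemma I2 y z : (y * D (D (D z)) - D (D (D z)) * y) + (D y * D (D z) - D (D z) * D y) *+ 2 = 0.
Proof.
rewrite [LHS](_ : _ = (D (y * D (D z) - D (D z) * y) + D (D (y * D z - D z * y))) *+ 2
  - ((y * D (D (D z)) - D (D (D z)) * y) + (D (D (y * D z - D z * y))) *+ 2));
  last by rewrite /Dc; nc_ring.
by rewrite T21 T31 mul0rn subr0.
Qed.

Lemma I3 y z : (D (D y) * D z - D z * D (D y)) - (D y * D (D z) - D (D z) * D y) = 0.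
Proof.
rewrite [LHS](_ : _ = ((y * D (D (D z)) - D (D (D z)) * y) + (D (D (y * D z - D z * y))) *+ 2) *+ 2
  - (D (y * D (D z) - D (D z) * y) + D (D (y * D z - D z * y))) *+ 3);
  last by rewrite /Dc; nc_ring.
by rewrite T21 T31 !mul0rn subr0.
Qed.

Lemma Hal y z : D y * D (D (D z)) + (D (D y) * D (D z)) *+ 2 = 0.
Proof.
rewrite [LHS](_ : _ = c * ((y * D (D (D z)) - D (D (D z)) * y) + (D y * D (D z) - D (D z) * D y) *+ 2)
  - ((y * D (D (D (c * z))) - D (D (D (c * z))) * y) + (D y * D (D (c * z)) - D (D (c * z)) * D y) *+ 2));
  last by rewrite /Dc; nc_ring.
by rewrite !I2 mulr0 subr0.
Qed.

Lemma Hbe y z : D (D (D y)) * D z - D (D y) * D (D z) = 0.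
Proof.
rewrite [LHS](_ : _ = c * ((D (D y) * D z - D z * D (D y)) - (D y * D (D z) - D (D z) * D y))
  - ((D (D y) * D (c * z) - D (c * z) * D (D y)) - (D y * D (D (c * z)) - D (D (c * z)) * D y)));
  last by rewrite /Dc; nc_ring.
by rewrite !I3 mulr0 subr0.
Qed.

Lemma HE1 y z : D (D (D y)) * D (D z) = 0.
Proof.
rewrite [LHS](_ : _ = D (D (D (D y))) * D z - (D (D (D (D y))) * D z - D (D (D y)) * D (D z)));
  last by rewrite /Dc; nc_ring.
by rewrite Hbe I1 mul0r subr0.
Qed.

Lemma Hs1 y z : D y * D (D (D z)) + (D (D (D y)) * D z) *+ 2 = 0.
Proof.
rewrite [LHS](_ : _ = (D y * D (D (D z)) + (D (D y) * D (D z)) *+ 2)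
  + (D (D (D y)) * D z - D (D y) * D (D z)) *+ 2); last by rewrite /Dc; nc_ring.
by rewrite Hal Hbe mul0rn addr0.
Qed.

Lemma HD3w y w z : D (D (D y)) * w * D (D (D z)) = 0.
Proof.
rewrite [LHS](_ : _ = (D (D (D y) * w) * D (D (D z)) + (D (D (D (D (D y) * w))) * D z) *+ 2)
  - D (D y) * (D w * D (D (D z)) + (D (D (D w)) * D z) *+ 2)
  - (D (D (D (D (D y)))) * w * D z) *+ 2 - (D (D (D (D y))) * D w * D z) *+ 6
  - (D (D (D y)) * D (D w) * D z) *+ 6); last by rewrite /Dc; nc_ring.
by rewrite !Hs1 !I1 HE1 !(mulr0, mul0r, mul0rn, subr0).
Qed.

Lemma HD3 y : D (D (D y)) = 0.
Proof. by apply: hsp => w; apply: HD3w. Qed.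

Lemma Hp y z : D y * D (D z) - D (D z) * D y = 0.
Proof.
apply: two_cancel.
rewrite [LHS](_ : _ = ((y * D (D (D z)) - D (D (D z)) * y) + (D y * D (D z) - D (D z) * D y) *+ 2)
  - (y * D (D (D z)) - D (D (D z)) * y)); last by rewrite /Dc; nc_ring.
by rewrite I2 HD3 mulr0 mul0r subrr subr0.
Qed.

Lemma HDD y z : D (D y) * D (D z) = 0.
Proof.
rewrite [LHS](_ : _ = D (D (D y)) * D z - (D (D (D y)) * D z - D (D y) * D (D z)));
  last by rewrite /Dc; nc_ring.
by rewrite Hbe HD3 mul0r subr0.
Qed.

Lemma H7 y w z : D (D y) * w * D (D z) + (D y * D w * D (D z)) *+ 2 = 0.
Proof.
rewrite [LHS](_ : _ = D (D (y * w)) * D (D z) - y * (D (D w) * D (D z)));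
  last by rewrite /Dc; nc_ring.
by rewrite !HDD mulr0 subr0.
Qed.

Lemma Hs z t : D (D z) * t * D (D z) + (D (D z) * D z * D t) *+ 2 = 0.
Proof.
rewrite [LHS](_ : _ = (D (D z) * t * D (D z) + (D z * D t * D (D z)) *+ 2)
  - (D z * (D t * D (D z) - D (D z) * D t)) *+ 2 - ((D z * D (D z) - D (D z) * D z) * D t) *+ 2);
  last by rewrite /Dc; nc_ring.
by rewrite H7 !Hp mulr0 mul0r !mul0rn !subr0.
Qed.

Lemma Hx z t : D (D z) * D z * t * D (D z) = 0.
Proof.
apply: two_cancel.
rewrite [LHS](_ : _ = (D (D z) * (t * D z) * D (D z) + (D (D z) * D z * D (t * D z)) *+ 2)
  - (D (D z) * t * D (D z) + (D (D z) * D z * D t) *+ 2) * D z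
  - D (D z) * t * (D z * D (D z) - D (D z) * D z)); last by rewrite /Dc; nc_ring.
by rewrite !Hs Hp mul0r mulr0 !subr0.
Qed.

Lemma HX z : D (D z) = 0.
Proof.
have a0 : forall t, D (D z) * t * D (D z) = 0.
  move=> t; apply: hsp => w.
  rewrite [LHS](_ : _ = D (D z) * t * (D (D z) * w * D (D z) + (D (D z) * D z * D w) *+ 2) * t * D (D z)
    - ((D (D z) * t * D (D z) + (D (D z) * D z * D t) *+ 2) * D z * D w * t * D (D z)) *+ 2
    + (D (D z) * D z * (D t * D z * D w * t) * D (D z)) *+ 4); last by rewrite /Dc; nc_ring.
  by rewrite !Hs Hx !(mulr0, mul0r, mul0rn, subr0, addr0).
by apply: hsp.
Qed.

Lemma HDz y : D y = 0.
Proof.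
have h1 : forall y w, D y * D w = 0.
  move=> y0 w; apply: two_cancel.
  rewrite [LHS](_ : _ = D (D (y0 * w)) - D (D y0) * w - y0 * D (D w)); last by rewrite /Dc; nc_ring.
  by rewrite !HX mul0r mulr0 !subr0.
apply: hsp => w.
rewrite [LHS](_ : _ = D y * D (w * y) - D y * D w * y); last by rewrite /Dc; nc_ring.
by rewrite !h1 mul0r subr0.
Qed.

Lemma c_central y : c * y = y * c.
Proof. by apply/eqP; rewrite -subr_eq0; apply/eqP; apply: HDz. Qed.

End Cpart.


Section Final.
Variables (F : fieldType) (A : algType F).
Hypothesis hchar : 2%N \notin [pchar F].
Hypothesis hsp : semiprime A.

Lemma lin_add (f : A -> A) : linear f -> forall x y, f (x + y) = f x + f y.
Proof. by move=> hl x y; have := hl 1 x y; rewrite !scale1r. Qed.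

Definition ddef (f : A -> A) (c : A) x := f x - c * x.

Lemma forward (f : A -> A) : QJDer f -> exists g d : A -> A, Cent g /\ Der d /\ f = (fun x => g x + d x).
Proof.
case=> hlin [h [hlinh hq]].
have hfadd := lin_add hlin; have hhadd := lin_add hlinh.
have [c hc] : exists c, f 1 = c by exists (f 1).
have hh : forall x, h x *+ 2 = f x *+ 2 + (x * c + c * x).
  move=> x; have := hq x 1; rewrite /jprod !mulr1 !mul1r hhadd hc => e.
  by rewrite mulr2n -e; nc_ring.
have hR1 : forall x y, (f x * y + y * f x + x * f y + f y * x) *+ 2
    = (f (x * y) + f (y * x)) *+ 2 + (x * y + y * x) * c + c * (x * y + y * x).
  move=> x y; have := hq x y; rewrite /jprod hhadd => e.
  rewrite (_ : f x * y + y * f x + x * f y + f y * x = h (x * y) + h (y * x));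
    last by rewrite -e; nc_ring.
  rewrite mulrnDl !hh; nc_ring.
have cc := c_central hchar hsp hfadd hR1.
pose d := ddef f c.
have hdadd : forall x y, d (x + y) = d x + d y.
  by move=> x y; rewrite /d /ddef hfadd mulrDr; nc_ring.
have hJ : forall x y, d (x * y + y * x) = d x * y + x * d y + d y * x + y * d x.
  move=> x y; apply: (@cert_close _ _ hchar _ _ 1).
  rewrite [LHS](_ : _ = - ((f x * y + y * f x + x * f y + f y * x) *+ 2
      - ((f (x * y) + f (y * x)) *+ 2 + (x * y + y * x) * c + c * (x * y + y * x)))
      + x * (c * y - y * c) - (c * x - x * c) * y + y * (c * x - x * c) - (c * y - y * c) * x);
    last by rewrite /d /ddef; nc_ringf f hfadd.
  by rewrite hR1 !cc !subrr !(mulr0, mul0r, oppr0, addr0, subr0).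
have hder := jder_der hchar hsp hdadd hJ.
exists (fun x => c * x), d; split; last split.
- split; first by move=> a u v; rewrite mulrDr -scalerAr.
  move=> x y; split; first by rewrite mulrA.
  by rewrite mulrA cc -mulrA.
- split; last exact: hder.
  move=> a u v; rewrite /d /ddef hlin mulrDr -scalerAr scalerBr.
  set s1 := a *: f u; set s2 := a *: (c * u); nc_ring.
- by apply: functional_extensionality => x; rewrite /d /ddef; nc_ring.
Qed.

Lemma backward (f : A -> A) : (exists g d : A -> A, Cent g /\ Der d /\ f = (fun x => g x + d x)) -> QJDer f.
Proof.
case=> g [d [[hlg hg] [[hld hd] ->]]].
have hgadd := lin_add hlg; have hdadd := lin_add hld.
split; first by move=> a u v; rewrite hlg hld scalerDr; nc_ring.
exists (fun x => g x *+ 2 + d x); split.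
  by move=> a u v; rewrite hlg hld scalerDr -scalerMnr mulrnDl; nc_ring.
move=> x y; rewrite /jprod hgadd hdadd !hd.
have e1 : g (x * y) *+ 2 = g x * y + x * g y.
  by rewrite mulr2n; congr (_ + _); [exact: (hg x y).1 | exact: (hg x y).2].
have e2 : g (y * x) *+ 2 = g y * x + y * g x.
  by rewrite mulr2n; congr (_ + _); [exact: (hg y x).1 | exact: (hg y x).2].
rewrite mulrnDl e1 e2; nc_ring.
Qed.

End Final.

Unset Implicit Arguments.

Theorem corollary4p6 (F : fieldType) (A : algType F)
  (hchar : 2%N \notin [pchar F]) (hsp : semiprime A) :
  forall f : A -> A,
    QJDer f <-> exists g d : A -> A, Cent g /\ Der d /\ f = (fun x => g x + d x).
Proof.
move=> f; split; [exact: forward | exact: backward].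
Qed.
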